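(* Let $\mathsf k$ be an algebraically closed field of characteristic $p>0$, and let $m<n$, $l_2$, $l_3$ be nonnegative integers. If there exists $\beta\in\mathsf k[x,y]$ with $\beta(0,y)=\beta(x,0)=0$ and $\delta^2(\beta)(z_1,z_2,z_3)=z_1^{p^{l_3}}z_2^{p^{l_2+m}}z_3^{p^{l_2+n}}$, then $p\neq2$ and $l_3-l_2\in\{m,n\}$. Conversely, if $p\ne2$, then such a $\beta$ exists, namely $\beta(x,y)=\frac12x^{2p^{l_3}}y^{p^{l_2+n}}$ if $l_3-l_2=m$, and $\beta(x,y)=x^{p^{l_3}+p^{l_2+m}}y^{p^{l_3}}+\frac12x^{p^{l_2+m}}y^{2p^{l_3}}$ if $l_3-l_2=n$.
   Context: For $\beta\in\mathsf k[x,y]$, $\delta^2(\beta)(z_1,z_2,z_3)=\beta(z_1,z_2)+\beta(z_1+z_2,z_3)-\beta(z_2,z_3)-\beta(z_1,z_2+z_3)$. *)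

(* Defs.v *)
From HB Require Import structures.
From mathcomp Require Import all_boot all_order all_algebra all_field.
Set Implicit Arguments. Unset Strict Implicit. Unset Printing Implicit Defensive.
Import GRing.Theory.
Local Open Scope ring_scope.

(* Bivariate polynomials k[x,y] are encoded as {poly {poly k}}:
   the inner variable is x, the outer variable is y.
   Trivariate polynomials k[z1,z2,z3] are {poly {poly {poly k}}}
   with z1 innermost, z3 outermost. *)
Definition poly3 (k : fieldType) := {poly {poly {poly k}}}.

Definition z1 (k : fieldType) : poly3 k := ('X%:P)%:P.
Definition z2 (k : fieldType) : poly3 k := 'X%:P.
Definition z3 (k : fieldType) : poly3 k := 'X.

(* substitution beta(u, v) of elements u v of k[z1,z2,z3] into beta in k[x,y] *)
Definition ev2 (k : fieldType) (beta : {poly {poly k}}) (u v : poly3 k) : poly3 k :=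
  (map_poly (fun c : {poly k} =>
     (map_poly (fun a : k => (a%:P%:P%:P : poly3 k)) c).[u]) beta).[v].

Definition delta2 (k : fieldType) (beta : {poly {poly k}}) : poly3 k :=
  ev2 beta (z1 k) (z2 k) + ev2 beta (z1 k + z2 k) (z3 k)
  - ev2 beta (z2 k) (z3 k) - ev2 beta (z1 k) (z2 k + z3 k).

Definition good_beta (k : fieldType) (p m n l2 l3 : nat) (beta : {poly {poly k}}) : Prop :=
  [/\ map_poly (fun c : {poly k} => c.[0]) beta = 0,
      beta.[0] = 0 &
      delta2 beta = (z1 k) ^+ (p ^ l3) * (z2 k) ^+ (p ^ (l2 + m)) * (z3 k) ^+ (p ^ (l2 + n))].

Definition beta_m (k : fieldType) (p n l2 l3 : nat) : {poly {poly k}} :=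
  ((2%:R : k)^-1 *: 'X^(2 * p ^ l3))%:P * 'X^(p ^ (l2 + n)).

Definition beta_n (k : fieldType) (p m l2 l3 : nat) : {poly {poly k}} :=
  ('X^(p ^ l3 + p ^ (l2 + m)))%:P * 'X^(p ^ l3)
  + ((2%:R : k)^-1 *: 'X^(p ^ (l2 + m)))%:P * 'X^(2 * p ^ l3).

(* Main.v *)
Require Import Defs.
From HB Require Import structures.
From mathcomp Require Import all_boot all_order all_algebra all_field.
From Stdlib Require Import Ring.
Import GRing.Theory.
Set Implicit Arguments. Unset Strict Implicit. Unset Printing Implicit Defensive.
Local Open Scope ring_scope.

Lemma size_map_le (R S : nzRingType) (f : R -> S) (q : {poly R}) :
  (size (map_poly f q) <= size q)%N.
Proof. by rewrite map_polyE (leq_trans (size_Poly _)) // size_map. Qed.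

Lemma ev2_sum (k : fieldType) (b : {poly {poly k}}) (u v : poly3 k) N :
  (size b <= N)%N -> (forall j, leq (size b`_j) N) ->
  ev2 b u v = \sum_(j < N) \sum_(i < N) (b`_j`_i)%:P%:P%:P * u ^+ i * v ^+ j.
Proof.
move=> hb hj; rewrite /ev2 (horner_coef_wide _ (leq_trans (size_map_le _ _) hb)).
apply: eq_bigr => j _; rewrite coef_map_id0; last by rewrite map_poly0 horner0.
rewrite (horner_coef_wide _ (leq_trans (size_map_le _ _) (hj j))) mulr_suml.
apply: eq_bigr => i _; rewrite coef_map_id0 //.
Qed.

Definition coef3 (k : fieldType) (P : poly3 k) a b c : k := P`_c`_b`_a.

Lemma coef3_sum (k : fieldType) I (r : seq I) (F : I -> poly3 k) a b c :
  coef3 (\sum_(i <- r) F i) a b c = \sum_(i <- r) coef3 (F i) a b c.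
Proof. by rewrite /coef3 !coef_sum. Qed.

Lemma coef3_C (k : fieldType) (x : k) (P : poly3 k) a b c :
  coef3 (x%:P%:P%:P * P) a b c = x * coef3 P a b c.
Proof. by rewrite /coef3 !coefCM. Qed.

Lemma coef3_Mn (k : fieldType) (P : poly3 k) n a b c :
  coef3 (P *+ n) a b c = coef3 P a b c *+ n.
Proof. by rewrite /coef3 !coefMn. Qed.

Lemma coef3_D (k : fieldType) (P Q : poly3 k) a b c :
  coef3 (P + Q) a b c = coef3 P a b c + coef3 Q a b c.
Proof. by rewrite /coef3 !coefD. Qed.

Lemma coef3_B (k : fieldType) (P Q : poly3 k) a b c :
  coef3 (P - Q) a b c = coef3 P a b c - coef3 Q a b c.
Proof. by rewrite /coef3 !coefB. Qed.

Lemma coef3_mon (k : fieldType) i j l a b c :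
  coef3 (z1 k ^+ i * z2 k ^+ j * z3 k ^+ l) a b c =
  ((i == a) && (j == b) && (l == c))%:R.
Proof.
rewrite /coef3 /z1 /z2 /z3 -!polyC_exp -polyCM coefMXn.
case: ltnP => hc.
  by rewrite !coef0 (_ : (l == c) = false) ?andbF // eq_sym ltn_eqF.
rewrite coefC; case: (eqVneq l c) => [<-|hlc].
  rewrite subnn eqxx andbT /= coefMXn; case: ltnP => hb.
    by rewrite !coef0 (_ : (j == b) = false) ?andbF // eq_sym ltn_eqF.
  rewrite coefC; case: (eqVneq j b) => [<-|hjb].
    by rewrite subnn eqxx /= coefXn eq_sym andbT.
  rewrite andbF.
  have : (b - j != 0)%N by rewrite subn_eq0 -ltnNge ltn_neqAle hjb hb.
  by move/negbTE->; rewrite coef0.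
rewrite andbF.
have : (c - l != 0)%N by rewrite subn_eq0 -ltnNge ltn_neqAle hlc hc.
by move/negbTE->; rewrite !coef0.
Qed.

Lemma collapse (R : pzRingType) (n b : nat) (G : nat -> R) :
  \sum_(k < n) ((val k == b)%:R * G k) = if (b < n)%N then G b else 0.
Proof.
case: ltnP => h.
  rewrite (bigD1 (Ordinal h)) //= eqxx mul1r big1 ?addr0 // => i.
  by rewrite -val_eqE /= => /negbTE ->; rewrite mul0r.
rewrite big1 // => i _; have : (val i != b).
  by apply: contraTneq h => <-; rewrite -ltnNge ltn_ord.
by move/negbTE->; rewrite mul0r.
Qed.

Lemma collapse_const (R : pzRingType) (n b : nat) (x : R) :
  \sum_(k < n) ((val k == b)%:R * x) = if (b < n)%N then x else 0.
Proof. exact: (collapse n b (fun=> x)). Qed.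

Lemma dcollapse (R : comPzRingType) (N x y : nat) (F : nat -> nat -> R) K :
  (x < N)%N -> (y < N)%N ->
  \sum_(j < N) \sum_(i < N) (F i j * (((val i == x)%:R * (val j == y)%:R) * K)) = F x y * K.
Proof.
move=> hx hy.
rewrite (eq_bigr (fun j : 'I_N => (val j == y)%:R * \sum_(i < N) ((val i == x)%:R * (F i j * K)))).
  by rewrite (@collapse _ N y (fun j => \sum_(i < N) ((val i == x)%:R * (F i j * K)))) hy (@collapse _ N x (fun i => F i y * K)) hx.
move=> j _; rewrite mulr_sumr; apply: eq_bigr => i _.
case: (eqVneq (val i) x) => h1; case: (eqVneq (val j) y) => h2;
  by rewrite /= !(mulr1n, mulr0n, mul0r, mulr0, mul1r, mulr1).
Qed.

Lemma L2 (R : pzRingType) (i j a b c : nat) :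
  \sum_(k < i.+1) ((((i - k)%N == a) && (val k == b) && (j == c))%:R *+ 'C(i, k)) =
  ((i == (a + b)%N)%:R * (j == c)%:R) * ('C((a + b)%N, a))%:R :> R.
Proof.
rewrite (eq_bigr (fun k : 'I_i.+1 => (val k == b)%:R * (((((i - b)%N == a) && (j == c))%:R *+ 'C(i, b)) : R))); last first.
  move=> k _; have [->|h] := eqVneq (val k) b; first by rewrite andbT mul1r.
  by rewrite andbF mul0r mul0rn.
rewrite collapse_const; have [->|hi] := eqVneq i (a + b)%N.
  rewrite -mulr_natr addnK eqxx ltnS leq_addl mul1r.
  by rewrite /= -[X in 'C(_, X)](addKn a b) bin_sub ?leq_addr.
rewrite mul0r mul0r; case: ifP => // hb.
rewrite (_ : ((i - b)%N == a) = false) ?mul0rn //; apply/negbTE.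
by apply: contra hi => /eqP <-; rewrite subnK.
Qed.

Lemma L4 (R : pzRingType) (i j a b c : nat) :
  \sum_(k < j.+1) (((i == a) && ((j - k)%N == b) && (val k == c))%:R *+ 'C(j, k)) =
  ((i == a)%:R * (j == (b + c)%N)%:R) * ('C((b + c)%N, b))%:R :> R.
Proof.
rewrite (eq_bigr (fun k : 'I_j.+1 => (val k == c)%:R * ((((i == a) && ((j - c)%N == b))%:R *+ 'C(j, c)) : R))); last first.
  move=> k _; have [->|h] := eqVneq (val k) c; first by rewrite andbT mul1r.
  by rewrite andbF mul0r mul0rn.
rewrite collapse_const; have [->|hi] := eqVneq j (b + c)%N.
  rewrite -mulr_natr addnK eqxx ltnS leq_addl andbT mulr1.
  by rewrite -[X in 'C(_, X)](addKn b c) bin_sub ?leq_addr.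
rewrite mulr0 mul0r; case: ifP => // hb.
rewrite (_ : ((j - c)%N == b) = false) ?andbF ?mul0rn //; apply/negbTE.
by apply: contra hi => /eqP <-; rewrite subnK.
Qed.

Lemma T1 (k : fieldType) (b : {poly {poly k}}) N a bb c :
  (size b <= N)%N -> (forall j, leq (size b`_j) N) -> (0 < c)%N ->
  coef3 (ev2 b (z1 k) (z2 k)) a bb c = 0.
Proof.
move=> hb hj hc; rewrite (ev2_sum _ _ hb hj) coef3_sum big1 // => j _.
rewrite coef3_sum big1 // => i _.
rewrite -mulrA coef3_C -[z1 k ^+ i * _](mulr1) -(expr0 (z3 k)) coef3_mon.
by rewrite (_ : (0 == c)%N = false) ?andbF ?mulr0 // eq_sym gtn_eqF.
Qed.

Lemma T3 (k : fieldType) (b : {poly {poly k}}) N a bb c :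
  (size b <= N)%N -> (forall j, leq (size b`_j) N) -> (0 < a)%N ->
  coef3 (ev2 b (z2 k) (z3 k)) a bb c = 0.
Proof.
move=> hb hj ha; rewrite (ev2_sum _ _ hb hj) coef3_sum big1 // => j _.
rewrite coef3_sum big1 // => i _.
rewrite -mulrA coef3_C -[z2 k ^+ i](mul1r) -(expr0 (z1 k)) coef3_mon.
by rewrite (_ : (0 == a)%N = false) ?mulr0 // eq_sym gtn_eqF.
Qed.

Lemma T2 (k : fieldType) (b : {poly {poly k}}) N a bb c :
  (size b <= N)%N -> (forall j, leq (size b`_j) N) -> (a + bb < N)%N -> (c < N)%N ->
  coef3 (ev2 b (z1 k + z2 k) (z3 k)) a bb c = b`_c`_(a + bb) * ('C(a + bb, a))%:R.
Proof.
move=> hb hj h1 h2; rewrite (ev2_sum _ _ hb hj) coef3_sum.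
rewrite -(dcollapse (fun i j => b`_j`_i) _ h1 h2); apply: eq_bigr => j _.
rewrite coef3_sum; apply: eq_bigr => i _.
rewrite -mulrA coef3_C -L2; congr (_ * _).
rewrite exprDn mulr_suml coef3_sum; apply: eq_bigr => l _.
by rewrite mulrnAl coef3_Mn coef3_mon.
Qed.

Lemma T4 (k : fieldType) (b : {poly {poly k}}) N a bb c :
  (size b <= N)%N -> (forall j, leq (size b`_j) N) -> (a < N)%N -> (bb + c < N)%N ->
  coef3 (ev2 b (z1 k) (z2 k + z3 k)) a bb c = b`_(bb + c)`_a * ('C(bb + c, bb))%:R.
Proof.
move=> hb hj h1 h2; rewrite (ev2_sum _ _ hb hj) coef3_sum.
rewrite -(dcollapse (fun i j => b`_j`_i) _ h1 h2); apply: eq_bigr => j _.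
rewrite coef3_sum; apply: eq_bigr => i _.
rewrite -mulrA coef3_C -L4; congr (_ * _).
rewrite exprDn mulr_sumr coef3_sum; apply: eq_bigr => l _.
by rewrite mulrnAr coef3_Mn mulrA coef3_mon.
Qed.

Lemma coef_X1n (k : fieldType) n x :
  (x <= n)%N -> (('X + 1 : {poly k}) ^+ n)`_x = ('C(n, x))%:R.
Proof.
move=> hx; rewrite exprD1n coef_sum.
rewrite (eq_bigr (fun i : 'I_n.+1 => (val i == x)%:R * ('C(n, i))%:R)).
  by rewrite (collapse n.+1 x (fun i => ('C(n, i))%:R)) ltnS hx.
by move=> i _; rewrite coefMn coefXn eq_sym mulr_natr.
Qed.

Lemma binpp (k : fieldType) p u v : p \in [pchar k] ->
  ('C(p ^ u + p ^ v, p ^ u)%N)%:R = 1 + (p ^ u == p ^ v)%N%:R :> k.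
Proof.
move=> hp; have pr := pcharf_prime hp.
have hpP : p \in [pchar {poly k}] by apply: (rmorph_pchar polyC).
have hn : forall e, [pchar {poly k}].-nat (p ^ e)%N.
  by move=> e; rewrite pnatX (pnatE _ pr) hpP.
have gx : (0 < p ^ u)%N by rewrite expn_gt0 prime_gt0.
have gy : (0 < p ^ v)%N by rewrite expn_gt0 prime_gt0.
rewrite -(coef_X1n k (leq_addr (p ^ v)%N (p ^ u)%N)) exprD !exprDn_pchar // !expr1n.
rewrite mulrDl !mulrDr !mulr1 !mul1r -exprD !coefD !coefXn coef1 eqxx.
rewrite (_ : (p ^ u == p ^ u + p ^ v)%N = false); last first.
  by rewrite -{1}(addn0 (p ^ u)%N) eqn_add2l eq_sym gtn_eqF.
by rewrite (gtn_eqF gx) /= mulr0n mulr1n add0r addr0.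
Qed.

Lemma sizes_bound (k : fieldType) (b : {poly {poly k}}) :
  exists M, forall j, leq (size b`_j) M.
Proof.
exists (\max_(j < size b) size (b`_j)%R) => j.
case: (ltnP j (size b)) => hj.
  by have := @leq_bigmax _ (fun j : 'I_(size b) => size (b`_j)%R) (Ordinal hj).
by rewrite nth_default // size_poly0.
Qed.

Lemma coef_delta2 (k : fieldType) (b : {poly {poly k}}) N a bb c :
  (size b <= N)%N -> (forall j, leq (size b`_j) N) ->
  (0 < a)%N -> (0 < bb)%N -> (0 < c)%N -> (a + bb + c < N)%N ->
  coef3 (delta2 b) a bb c =
  b`_c`_(a + bb) * ('C(a + bb, a))%:R - b`_(bb + c)`_a * ('C(bb + c, bb))%:R.
Proof.
move=> hb hj ha hbb hc hN.
rewrite /delta2 !coef3_B coef3_D (@T1 _ _ N a bb c hb hj hc) (@T3 _ _ N a bb c hb hj ha) add0r subr0.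
rewrite (@T2 _ _ N a bb c hb hj) ?(@T4 _ _ N a bb c hb hj) //.
- by apply: leq_ltn_trans hN; rewrite -addnA leq_addr.
- by apply: leq_ltn_trans hN; rewrite -addnA leq_addl.
- by apply: leq_ltn_trans hN; rewrite leq_addr.
- by apply: leq_ltn_trans hN; rewrite leq_addl.
Qed.

Lemma fwd (k : fieldType) (p m n l2 l3 : nat) (b : {poly {poly k}}) :
  p \in [pchar k] -> (m < n)%N -> good_beta p m n l2 l3 b ->
  p <> 2%N /\ (l3 = l2 + m \/ l3 = l2 + n)%N.
Proof.
move=> hp hmn [_ _ hd].
have pr := pcharf_prime hp; have p1 := prime_gt1 pr.
pose S := (p ^ l3 + p ^ (l2 + m) + p ^ (l2 + n))%N.
have [M hM] := sizes_bound b.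
pose N := (size b + M + (S + S + S)).+1.
have hb : (size b <= N)%N by rewrite /N; apply: leqW; rewrite -addnA leq_addr.
have hj : forall j, leq (size b`_j) N.
  move=> j; rewrite /N; apply: leqW; apply: leq_trans (hM j) _.
  by rewrite -addnA (leq_trans (leq_addr (S + S + S) M)) // leq_addl.
pose L := [:: l3; (l2 + m)%N; (l2 + n)%N].
have hS : forall u, u \in L -> (p ^ u <= S)%N.
  move=> u; rewrite !inE => /or3P [] /eqP ->; rewrite /S.
  - by rewrite -addnA leq_addr.
  - by rewrite -addnA (leq_trans (leq_addr (p ^ (l2 + n)) _)) // leq_addl.
  - by rewrite leq_addl.
have E : forall u v t, u \in L -> v \in L -> t \in L ->
  b`_(p ^ t)`_(p ^ u + p ^ v) * (1 + (u == v)%:R) - b`_(p ^ v + p ^ t)`_(p ^ u) * (1 + (v == t)%:R)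
   = ((l3 == u) && (l2 + m == v) && (l2 + n == t))%:R.
  move=> u v t hu hv ht.
  have := congr1 (fun P => coef3 P (p ^ u) (p ^ v) (p ^ t)) hd.
  rewrite coef3_mon (coef_delta2 (N := N)) ?expn_gt0 ?prime_gt0 //; last first.
    by rewrite ltnS (leq_trans _ (leq_addl _ _)) // !leq_add ?hS.
  by rewrite !binpp // !eqn_exp2l.
have La : l3 \in L by rewrite !inE eqxx.
have Lb : (l2 + m)%N \in L by rewrite !inE eqxx orbT.
have Lc : (l2 + n)%N \in L by rewrite !inE eqxx !orbT.
have hbc : (l2 + m == l2 + n)%N = false by rewrite eqn_add2l ltn_eqF.
have hcb : (l2 + n == l2 + m)%N = false by rewrite eq_sym.
have disj : (l3 = l2 + m \/ l3 = l2 + n)%N.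
  case: (eqVneq l3 (l2 + m)) => hab; first by left.
  case: (eqVneq l3 (l2 + n)) => hac; first by right.
  exfalso.
  have hba : (l2 + m == l3)%N = false by rewrite eq_sym (negbTE hab).
  have hca : (l2 + n == l3)%N = false by rewrite eq_sym (negbTE hac).
  have e1 := E _ _ _ La Lb Lc.
  have e2 := E _ _ _ Lb La Lc.
  have e3 := E _ _ _ Lb Lc La.
  have e4 := E _ _ _ Lc Lb La.
  have e5 := E _ _ _ Lc La Lb.
  have e6 := E _ _ _ La Lc Lb.
  move: e1 e2 e3 e4 e5 e6.
  rewrite !eqxx (negbTE hab) (negbTE hac) hba hca hbc hcb /=.
  rewrite !addr0 !mulr1 (addnC (p ^ (l2 + m))%N (p ^ l3)%N) (addnC (p ^ (l2 + n))%N (p ^ l3)%N).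
  rewrite (addnC (p ^ (l2 + n))%N (p ^ (l2 + m))%N).
  move=> e1 /subr0_eq e2 /subr0_eq e3 /subr0_eq e4 /subr0_eq e5 /subr0_eq e6.
  move: e1; rewrite e2 -e3 e4 -e5 e6 subrr => /eqP; rewrite eq_sym oner_eq0.
  by [].
split=> //.
move=> p2; rewrite p2 in hp.
have h11 : (1 + 1 : k) = 0 by rewrite -mulr2n; exact: (pcharf0 hp).
case: disj => hl.
- have e1 := E _ _ _ Lb Lb Lc.
  have e2 := E _ _ _ Lb Lc Lb.
  have e3 := E _ _ _ Lc Lb Lb.
  move: e1 e2 e3; rewrite hl !eqxx hbc hcb /= h11 !mulr0 !addr0 !mulr1.
  rewrite (addnC (p ^ (l2 + n))%N (p ^ (l2 + m))%N) subr0 sub0r.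
  move=> e1 /subr0_eq e2 e3; move: e1; rewrite -e2 e3 oppr0 => /eqP.
  by rewrite eq_sym oner_eq0.
- have e1 := E _ _ _ Lc Lb Lc.
  have e2 := E _ _ _ Lb Lc Lc.
  have e3 := E _ _ _ Lc Lc Lb.
  move: e1 e2 e3; rewrite hl !eqxx hbc hcb /= h11 !mulr0 !addr0 !mulr1.
  rewrite (addnC (p ^ (l2 + n))%N (p ^ (l2 + m))%N) subr0 sub0r.
  move=> e1 e2 /eqP; rewrite oppr_eq0 => /eqP e3; move: e1.
  rewrite e2 e3 subrr => /eqP; by rewrite eq_sym oner_eq0.
Qed.

Lemma ev2_add (k : fieldType) (b1 b2 : {poly {poly k}}) u v :
  ev2 (b1 + b2) u v = ev2 b1 u v + ev2 b2 u v.
Proof.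
rewrite /ev2 -hornerD; congr (_.[v]); apply/polyP => j.
rewrite coefD !coef_map_id0 ?map_poly0 ?horner0 // coefD -hornerD.
congr (_.[u]); apply/polyP => i.
by rewrite coefD !coef_map_id0 // coefD !polyCD.
Qed.

Lemma ev2_mono (k : fieldType) (c : k) i j u v :
  ev2 ((c *: 'X^i)%:P * 'X^j) u v = c%:P%:P%:P * u ^+ i * v ^+ j.
Proof.
rewrite /ev2.
set g := (fun q : {poly k} => (map_poly (fun a : k => (a%:P%:P%:P : poly3 k)) q).[u]).
have -> : map_poly g ((c *: 'X^i)%:P * 'X^j) = (g (c *: 'X^i))%:P * 'X^j.
  apply/polyP => l; rewrite coef_map_id0 ?/g ?map_poly0 ?horner0 // !coefMXn.
  case: ltnP => _; first by rewrite map_poly0 horner0.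
  rewrite !coefC; case: eqP => // _; by rewrite map_poly0 horner0.
rewrite hornerCM hornerXn /g; congr (_ * _).
have -> : map_poly (fun a : k => (a%:P%:P%:P : poly3 k)) (c *: 'X^i) = (c%:P%:P%:P) *: 'X^i.
  apply/polyP => l; rewrite coef_map_id0 // !coefZ !coefXn.
  by case: eqP => _; rewrite ?mulr1 ?mulr0.
by rewrite hornerZ hornerXn.
Qed.

Definition radd (R : comPzRingType) (x y : R) : R := x + y.
Definition rmul (R : comPzRingType) (x y : R) : R := x * y.
Definition ropp (R : comPzRingType) (x : R) : R := - x.
Definition rsub (R : comPzRingType) (x y : R) : R := x - y.
Definition rzero (R : comPzRingType) : R := 0.
Definition rone (R : comPzRingType) : R := 1.

Lemma rthR (R : comPzRingType) :
  @ring_theory R (rzero R) (rone R) (@radd R) (@rmul R) (@rsub R) (@ropp R) eq.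
Proof.
constructor; rewrite /radd /rmul /ropp /rsub /rzero /rone => //.
- exact: add0r.
- exact: addrC.
- exact: addrA.
- exact: mul1r.
- exact: mulrC.
- exact: mulrA.
- exact: mulrDl.
- exact: subrr.
Qed.

Section S.
Variable R : comPzRingType.
Add Ring RRing : (rthR R).

Lemma rsubE (x y : R) : x - y = rsub x y. Proof. by []. Qed.
Lemma raddE (x y : R) : x + y = radd x y. Proof. by []. Qed.
Lemma rmulE (x y : R) : x * y = rmul x y. Proof. by []. Qed.
Lemma roppE (x : R) : - x = ropp x. Proof. by []. Qed.
Lemma roneE : 1 = rone R. Proof. by []. Qed.

Ltac rnorm := rewrite ?expr2 ?rsubE ?roppE ?raddE ?rmulE ?roneE;
  match goal with |- ?a = ?b => change (@eq (GRing.ComPzRing.sort R) a b) end.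

Lemma alg_m (h X Y Z W : R) : h * 2%:R = 1 ->
  h * X ^+ 2 * Z + h * (X + Y) ^+ 2 * W - h * Y ^+ 2 * W - h * X ^+ 2 * (Z + W)
  = X * Y * W.
Proof.
rewrite mulr2n => hh.
have -> : X * Y * W = (h * (1 + 1)) * (X * Y * W) by rewrite hh mul1r.
rnorm; ring.
Qed.

Lemma alg_n (h a1 a2 b1 b2 c1 : R) : h * 2%:R = 1 ->
  (a1 * a2 * b1 + h * a2 * b1 ^+ 2) + ((a1 + b1) * (a2 + b2) * c1 + h * (a2 + b2) * c1 ^+ 2)
  - (b1 * b2 * c1 + h * b2 * c1 ^+ 2) - (a1 * a2 * (b1 + c1) + h * a2 * (b1 + c1) ^+ 2)
  = a1 * b2 * c1.
Proof.
rewrite mulr2n => hh.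
have -> : a1 * b2 * c1 = a1 * b2 * c1 + (1 - h * (1 + 1)) * (a2 * b1 * c1).
  by rewrite hh subrr mul0r addr0.
rnorm; ring.
Qed.
End S.

Lemma mono_c0 (k : fieldType) (c : k) i j : (0 < i)%N ->
  map_poly (fun q : {poly k} => q.[0]) ((c *: 'X^i)%:P * 'X^j) = 0.
Proof.
move=> hi; apply/polyP => l; rewrite coef_map_id0 ?horner0 // coefMXn coef0.
case: ltnP => _; first by rewrite horner0.
rewrite coefC; case: eqP => _; last by rewrite horner0.
by rewrite hornerZ hornerXn expr0n (gtn_eqF hi) mulr0.
Qed.

Lemma mono_r0 (k : fieldType) (c : k) i j : (0 < j)%N ->
  ((c *: 'X^i)%:P * 'X^j).[0] = 0.
Proof. by move=> hj; rewrite hornerCM hornerXn expr0n (gtn_eqF hj) mulr0. Qed.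

Lemma map0D (k : fieldType) (b1 b2 : {poly {poly k}}) :
  map_poly (fun q : {poly k} => q.[0]) (b1 + b2) =
  map_poly (fun q : {poly k} => q.[0]) b1 + map_poly (fun q : {poly k} => q.[0]) b2.
Proof. by apply/polyP => l; rewrite coefD !coef_map_id0 ?horner0 // coefD hornerD. Qed.

Lemma two_nz (k : fieldType) p : p \in [pchar k] -> p <> 2%N -> (2%:R : k) != 0.
Proof.
move=> hp hp2; apply/negP => h2.
have c2 : (2%N \in [pchar k]) by rewrite inE /= h2.
move: c2; rewrite (pcharf_eq hp) inE => /eqP h.
by apply: hp2.
Qed.
Lemma frob3 (k : fieldType) p e (x y : poly3 k) : p \in [pchar k] ->
  (x + y) ^+ (p ^ e) = x ^+ (p ^ e) + y ^+ (p ^ e).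
Proof.
move=> hp; have pr := pcharf_prime hp.
have h1 : p \in [pchar {poly k}] by apply: (rmorph_pchar polyC).
have h2 : p \in [pchar {poly {poly k}}] by apply: (rmorph_pchar polyC).
have h3 : p \in [pchar (poly3 k)] by apply: (rmorph_pchar polyC).
by rewrite exprDn_pchar // pnatX (pnatE _ pr) h3.
Qed.

Lemma half3 (k : fieldType) : (2%:R : k) != 0 ->
  ((2%:R : k)^-1%:P%:P%:P : poly3 k) * 2%:R = 1.
Proof.
move=> h2.
have e : (2%:R : poly3 k) = ((2%:R : k)%:P%:P%:P) by rewrite !polyC_natr.
have h1 : (((2%:R : k)^-1)%:P * (2%:R : k)%:P : {poly k}) = 1.
  by rewrite -polyCM mulVf // polyC1.
have h1' : (((2%:R : k)^-1)%:P%:P * ((2%:R : k)%:P)%:P : {poly {poly k}}) = 1.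
  by rewrite -polyCM h1 polyC1.
by rewrite e -polyCM h1' polyC1.
Qed.

Lemma conv_m (k : fieldType) p m n l2 l3 : p \in [pchar k] -> p <> 2%N ->
  l3 = (l2 + m)%N -> good_beta p m n l2 l3 (beta_m k p n l2 l3).
Proof.
move=> hp hp2 hl; have pr := pcharf_prime hp.
have gp : forall e, (0 < p ^ e)%N by move=> e; rewrite expn_gt0 prime_gt0.
split.
- by rewrite /beta_m mono_c0 // muln_gt0 gp.
- by rewrite /beta_m mono_r0.
rewrite /delta2 /beta_m !ev2_mono (mulnC 2) !exprM !frob3 //.
rewrite hl; apply: alg_m; exact: half3 (two_nz hp hp2).
Qed.

Lemma ev2_mono1 (k : fieldType) i j (u v : poly3 k) :
  ev2 (('X^i)%:P * 'X^j) u v = u ^+ i * v ^+ j.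
Proof.
have o : ((1 : k)%:P%:P%:P : poly3 k) = 1.
  have o1 : ((1 : k)%:P : {poly k}) = 1 by rewrite polyC1.
  have o2 : ((1 : {poly k})%:P : {poly {poly k}}) = 1 by rewrite polyC1.
  by rewrite o1 o2 polyC1.
by rewrite -['X^i]scale1r ev2_mono o mul1r.
Qed.

Lemma conv_n (k : fieldType) p m n l2 l3 : p \in [pchar k] -> p <> 2%N ->
  l3 = (l2 + n)%N -> good_beta p m n l2 l3 (beta_n k p m l2 l3).
Proof.
move=> hp hp2 hl; have pr := pcharf_prime hp.
have gp : forall e, (0 < p ^ e)%N by move=> e; rewrite expn_gt0 prime_gt0.
have eb : beta_n k p m l2 l3 =
  (1 *: 'X^(p ^ l3 + p ^ (l2 + m)))%:P * 'X^(p ^ l3)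
  + ((2%:R : k)^-1 *: 'X^(p ^ (l2 + m)))%:P * 'X^(2 * p ^ l3).
  by rewrite scale1r.
split.
- by rewrite eb map0D !mono_c0 ?addr0 // ?addn_gt0 ?gp.
- by rewrite eb hornerD !mono_r0 ?addr0 // muln_gt0 gp.
rewrite /delta2 /beta_n !ev2_add !ev2_mono1 !ev2_mono.
rewrite !(exprD _ (p ^ l3)%N (p ^ (l2 + m))%N) (mulnC 2) !exprM !frob3 //.
rewrite hl; apply: alg_n; exact: half3 (two_nz hp hp2).
Qed.

Unset Implicit Arguments.
Unset Strict Implicit.

Theorem mainTheorem14 (k : closedFieldType) (p : nat) (hp : p \in [pchar k])
  (m n l2 l3 : nat) (hmn : (m < n)%N) :
  ((exists beta : {poly {poly k}}, good_beta p m n l2 l3 beta) ->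
     p <> 2%N /\ (l3%:Z - l2%:Z = m%:Z \/ l3%:Z - l2%:Z = n%:Z)) /\
  (p <> 2%N -> l3%:Z - l2%:Z = m%:Z -> good_beta p m n l2 l3 (beta_m k p n l2 l3)) /\
  (p <> 2%N -> l3%:Z - l2%:Z = n%:Z -> good_beta p m n l2 l3 (beta_n k p m l2 l3)).
Proof.
have key : forall a b c : nat, (a%:Z - b%:Z = c%:Z) <-> a = (b + c)%N.
  move=> a b c; split.
    by move/eqP; rewrite subr_eq -PoszD => /eqP [->]; rewrite addnC.
  by move=> ->; rewrite PoszD addrAC subrr add0r.
split; last split.
- case=> b hb; have [h1 h2] := fwd hp hmn hb; split => //.
  by case: h2 => h; [left|right]; apply/key.
- by move=> hp2 /key hl; apply: conv_m.
- by move=> hp2 /key hl; apply: conv_n.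
Qed.
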